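(* Let $\mathcal V$ be a Stone variety of profinite $\Omega$-algebras. Then $\mathcal V\cap\mathsf{Fin}_\Omega$ is the least Stone pseudovariety $\mathcal S$ (with respect to inclusion) such that $\widehat{\mathcal S}=\mathcal V$.
   Context: $\Omega=\biguplus_n\Omega_n$ is a fixed topological signature; a Stone topological $\Omega$-algebra is a compact Hausdorff 0-dimensional space with continuous evaluation maps $\Omega_n\times A^n\to A$. A topological algebra is profinite if it is compact and any two distinct elements are separated by a continuous homomorphism into a finite discrete algebra. $\mathsf{Fin}_\Omega$ is the class of all finite (discrete) topological $\Omega$-algebras. A Stone pseudovariety is a nonempty class of Stone topological algebras closed under images by onto continuous homomorphisms that are Stone topological algebras, closed subalgebras, and finite direct products; a Stone variety is defined likewise with arbitrary direct products. For a class $\mathcal S$, $\widehat{\mathcal S}$ is the class of Stone topological algebras that are residually $\mathcal S$ (any two distinct elements separated by a continuous homomorphism into a member of $\mathcal S$). In the paper this least element is denoted $\mathcal V_{\min}$. *)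

(* Defs.v *)
From HB Require Import structures.
From mathcomp Require Import all_boot all_order all_algebra.
From mathcomp Require Import all_classical.
From mathcomp Require Import topology.

Set Implicit Arguments.
Unset Strict Implicit.
Unset Printing Implicit Defensive.

Local Open Scope classical_set_scope.

Lemma fst_cont (X Y : topologicalType) : continuous (fun p : X * Y => p.1).
Proof. move=> p; exact: cvg_fst. Qed.

Lemma snd_cont (X Y : topologicalType) : continuous (fun p : X * Y => p.2).
Proof. move=> p; exact: cvg_snd. Qed.

Lemma pair_cont (Z X Y : topologicalType) (f : Z -> X) (g : Z -> Y) :
  continuous f -> continuous g -> continuous (fun z => (f z, g z)).
Proof. move=> fc gc z; exact: cvg_pair (fc z) (gc z). Qed.

Lemma prod_proj_continuous (I : Type) (K : I -> topologicalType) (i : I) :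
  continuous (fun f : prod_topology K => f i).
Proof.
move=> f.
have H : nbhs (f : prod_topology K) --> f by apply: cvg_id.
move: H; rewrite /prod_topology /product_topology_def.
move/cvg_sup => /(_ i) H.
apply: cvg_trans (cvg_app (fun g : forall i, K i => g i) H) _.
exact: (@initial_continuous (forall i, K i) (K i) (fun g => g i) f).
Qed.

Lemma prod_continuous_into (X : topologicalType) (I : Type)
  (K : I -> topologicalType) (g : X -> prod_topology K) :
  (forall i, continuous (fun x => g x i)) -> continuous g.
Proof.
move=> gc x.
rewrite /prod_topology /product_topology_def.
apply/cvg_sup => i.
exact: (@continuous_comp_initial (forall i, K i) X (K i) (fun h => h i) g (gc i) x).
Qed.

(* A topological signature Omega = disjoint union of the Omega_n, given as a
   family [Om : nat -> topologicalType] (Om n = the space of n-ary symbols). *)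

Record topAlg (Om : nat -> topologicalType) := TopAlg {
  ta_car :> topologicalType;
  ta_op : forall n, Om n -> ('I_n -> ta_car) -> ta_car;
  ta_op_cont : forall n,
    continuous (fun p : Om n * prod_topology (fun _ : 'I_n => ta_car) =>
                  ta_op p.1 p.2)
}.

Arguments ta_op {Om} t {n}.

Definition is_hom (Om : nat -> topologicalType) (A B : topAlg Om)
  (f : A -> B) : Prop :=
  forall n (o : Om n) (x : 'I_n -> A), f (ta_op A o x) = ta_op B o (f \o x).

Definition cont_hom (Om : nat -> topologicalType) (A B : topAlg Om)
  (f : A -> B) : Prop := continuous f /\ is_hom f.

Definition Stone (Om : nat -> topologicalType) (A : topAlg Om) : Prop :=
  [/\ compact [set: (A : topologicalType)], hausdorff_space A
    & zero_dimensional A].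

Definition FinDisc (Om : nat -> topologicalType) (A : topAlg Om) : Prop :=
  finite_set [set: (A : topologicalType)] /\ (forall U : set A, open U).

Definition profinite (Om : nat -> topologicalType) (A : topAlg Om) : Prop :=
  compact [set: (A : topologicalType)] /\
  forall x y : A, x <> y ->
    exists B : topAlg Om, FinDisc B /\
      exists f : A -> B, cont_hom f /\ f x <> f y.

Definition tclass (Om : nat -> topologicalType) := topAlg Om -> Prop.

Section Product.
Variables (Om : nat -> topologicalType) (I : Type) (A : I -> topAlg Om).

Definition prod_car : topologicalType := prod_topology (fun i => ta_car (A i)).

Definition prod_op n (o : Om n) (x : 'I_n -> prod_car) : prod_car :=
  fun i => ta_op (A i) o (fun j => x j i).

Lemma prod_op_cont n :
  continuous (fun p : Om n * prod_topology (fun _ : 'I_n => prod_car) =>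
                prod_op p.1 p.2).
Proof.
apply: prod_continuous_into => i /=.
rewrite /prod_op.
pose h := fun p : Om n * prod_topology (fun _ : 'I_n => prod_car) =>
  (p.1, (fun j => p.2 j i) : prod_topology (fun _ : 'I_n => ta_car (A i))).
have hc : continuous h.
  apply: pair_cont; first exact: fst_cont.
  apply: prod_continuous_into => j.
  move=> p.
  apply: (@continuous_comp _ _ _ (fun p : Om n * prod_topology (fun _ : 'I_n => prod_car) => p.2 j)
             (fun g : prod_car => g i)).
    apply: (@continuous_comp _ _ _ (fun p : Om n * prod_topology (fun _ : 'I_n => prod_car) => p.2)
             (fun g : prod_topology (fun _ : 'I_n => prod_car) => g j)).
      exact: snd_cont.
    exact: prod_proj_continuous.
  exact: prod_proj_continuous.
move=> p.
exact: (@continuous_comp _ _ _ h (fun q => ta_op (A i) q.1 q.2) p (hc p)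
          (@ta_op_cont Om (A i) n (h p))).
Qed.

Definition prodAlg : topAlg Om := @TopAlg Om prod_car prod_op prod_op_cont.

End Product.

Definition residually (Om : nat -> topologicalType) (S : tclass Om)
  (A : topAlg Om) : Prop :=
  forall x y : A, x <> y ->
    exists B : topAlg Om, S B /\ exists f : A -> B, cont_hom f /\ f x <> f y.

Definition hat (Om : nat -> topologicalType) (S : tclass Om) : tclass Om :=
  fun A => Stone A /\ residually S A.

Definition closed_images (Om : nat -> topologicalType) (S : tclass Om) : Prop :=
  forall (A B : topAlg Om) (f : A -> B),
    S A -> Stone B -> cont_hom f -> (forall y : B, exists x, f x = y) -> S B.

(* B is (isomorphic, as a topological algebra, to) a closed subalgebra of A:
   there is a continuous injective homomorphism f : B -> A with closed image
   which is a homeomorphism onto its image (every open set of B is the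
   preimage of an open set of A). *)
Definition closed_subalg_of (Om : nat -> topologicalType) (B A : topAlg Om)
  (f : B -> A) : Prop :=
  [/\ cont_hom f, injective f, closed (range f)
    & forall U : set B, open U -> exists W : set A, open W /\ U = f @^-1` W].

Definition closed_subalgs (Om : nat -> topologicalType) (S : tclass Om) : Prop :=
  forall (A B : topAlg Om) (f : B -> A), S A -> closed_subalg_of f -> S B.

Definition closed_finprods (Om : nat -> topologicalType) (S : tclass Om) : Prop :=
  forall (n : nat) (A : 'I_n -> topAlg Om), (forall i, S (A i)) -> S (prodAlg A).

Definition closed_prods (Om : nat -> topologicalType) (S : tclass Om) : Prop :=
  forall (I : Type) (A : I -> topAlg Om), (forall i, S (A i)) -> S (prodAlg A).

Definition Stone_pseudovariety (Om : nat -> topologicalType) (S : tclass Om) :=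
  [/\ exists A, S A, (forall A, S A -> Stone A), closed_images S,
      closed_subalgs S & closed_finprods S].

Definition Stone_variety (Om : nat -> topologicalType) (S : tclass Om) :=
  [/\ exists A, S A, (forall A, S A -> Stone A), closed_images S,
      closed_subalgs S & closed_prods S].

Definition finite_part (Om : nat -> topologicalType) (V : tclass Om) : tclass Om :=
  fun A => V A /\ FinDisc A.

(* Main.v *)
Require Import Defs.
From HB Require Import structures.
From mathcomp Require Import all_boot all_order all_algebra.
From mathcomp Require Import all_classical.
From mathcomp Require Import topology.
From mathcomp Require Import finmap.

Set Implicit Arguments.
Unset Strict Implicit.
Unset Printing Implicit Defensive.
Local Open Scope classical_set_scope.
Section H.
Variable Om : nat -> topologicalType.

Lemma prod_hausdorff (I : eqType) (B : I -> topAlg Om) :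
  (forall i, hausdorff_space (B i)) -> hausdorff_space (prodAlg B).
Proof. exact: hausdorff_product. Qed.

Lemma fin_haus_open (X : topologicalType) :
  finite_set [set: X] -> hausdorff_space X -> forall U : set X, open U.
Proof.
move=> fX hX U; rewrite -(setCK U) openC; apply: compact_closed => //.
by apply: finite_compact; apply: sub_finite_set fX.
Qed.

Lemma disc_haus (X : topologicalType) :
  (forall U : set X, open U) -> hausdorff_space X.
Proof.
move=> dX; rewrite open_hausdorff => x y /eqP xy.
exists ([set x], [set y]); first by split; apply/mem_set.
split=> //; apply/eqP/seteqP; split=> z //= [-> e]; exact: xy.
Qed.

Lemma disc_zd (X : topologicalType) :
  (forall U : set X, open U) -> zero_dimensional X.
Proof.
move=> dX x y /eqP xy; exists [set x]; split=> //; last by move=> e; apply: xy.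
by split=> //; rewrite -openC.
Qed.

Lemma findisc_stone (A : topAlg Om) : FinDisc A -> Stone A.
Proof.
case=> fA dA; split; first exact: finite_compact.
  exact: disc_haus. exact: disc_zd.
Qed.

Lemma embed (A P : topAlg Om) (f : A -> P) :
  compact [set: A] -> hausdorff_space P -> cont_hom f -> injective f ->
  closed_subalg_of f.
Proof.
move=> cA hP [fc fh] fi; split => //.
  apply: compact_closed => //; apply: continuous_compact => //.
  exact: continuous_subspaceT.
move=> U oU; exists (~` (f @` (~` U))); split.
  rewrite openC; apply: compact_closed => //; apply: continuous_compact.
    exact: continuous_subspaceT.
  by apply: subclosed_compact cA _ => //; rewrite closedC.
apply/seteqP; split=> x /=.
  by move=> Ux [y nUy /fi eyx]; apply: nUy; rewrite eyx.
move=> H; apply: contrapT => nUx; apply: H; by exists x.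
Qed.
Lemma finite_prod n (A : 'I_n -> topAlg Om) :
  (forall i, finite_set [set: A i]) -> finite_set [set: prodAlg A].
Proof.
move=> fA.
have H i : exists X : {fset A i}, [set: A i] = [set` X] := proj1 finite_fsetP (fA i).
pose X i := projT1 (cid (H i)).
have XP i : [set: A i] = [set` X i] := projT2 (cid (H i)).
pose K := \max_(i < n) size (X i).
have memX i (x : A i) : x \in (X i : seq _).
  by have : [set` X i] x by rewrite -XP.
have idxK i (x : A i) : (index x (X i) < K.+1)%N.
  rewrite ltnS; apply: (@leq_trans (size (X i))); first by apply: ltnW; rewrite index_mem memX.
  exact: leq_bigmax.
pose F (x : prodAlg A) : {ffun 'I_n -> 'I_K.+1} :=
  [ffun i => inord (index (x i) (X i))].
have Finj : injective F.
  move=> x y /ffunP Fxy; apply: functional_extensionality_dep => i.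
  move: (Fxy i); rewrite !ffunE => /(congr1 val) /=; rewrite !inordK ?idxK //. idtac.
  by move=> e; exact: (index_inj (x i) (memX i (x i)) (memX i (y i)) e).
have -> : [set: prodAlg A] = F @^-1` [set: {ffun 'I_n -> 'I_K.+1}] by [].
apply: finite_preimage; first by move=> x y _ _; apply: Finj.
exact: finite_finset.
Qed.
End H.
Section Img.
Variables (Om : nat -> topologicalType) (A B : topAlg Om) (f : A -> B).
Hypothesis fch : cont_hom f.

Let T : topologicalType := set_type (range f).

Lemma img_op_mem n (o : Om n) (x : 'I_n -> T) :
  ta_op B o (set_val \o x) \in range f.
Proof.
case: fch => _ fh.
have Hx j : exists a, f a = set_val (x j).
  case: (x j) => b bP /=; have := set_mem bP; case=> a _ fab.
  by exists a.
have [g Hg] := boolp.choice Hx.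
apply/mem_set; exists (ta_op A o g) => //.
rewrite fh; congr (ta_op B o _); apply: boolp.funext => j /=; exact: Hg.
Qed.

Definition img_op n (o : Om n) (x : 'I_n -> T) : T :=
  exist _ (ta_op B o (set_val \o x)) (img_op_mem o x).

Lemma img_op_cont n :
  continuous (fun p : Om n * prod_topology (fun _ : 'I_n => T) =>
                img_op p.1 p.2).
Proof.
apply: continuous_comp_initial.
pose h := fun p : Om n * prod_topology (fun _ : 'I_n => T) =>
  (p.1, (fun j => set_val (p.2 j)) : prod_topology (fun _ : 'I_n => ta_car B)).
have hc : continuous h.
  apply: pair_cont; first exact: fst_cont.
  apply: prod_continuous_into => j p.
  apply: (@continuous_comp _ _ _ (fun p : Om n * prod_topology (fun _ : 'I_n => T) => p.2 j)
             (@set_val _ (range f))).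
    apply: (@continuous_comp _ _ _ (fun p : Om n * prod_topology (fun _ : 'I_n => T) => p.2)
             (fun g : prod_topology (fun _ : 'I_n => T) => g j)).
      exact: snd_cont.
    exact: prod_proj_continuous.
  exact: initial_continuous.
move=> p.
exact: (@continuous_comp _ _ _ h (fun q => ta_op B q.1 q.2) p (hc p)
          (@ta_op_cont Om B n (h p))).
Qed.

Definition imgAlg : topAlg Om := @TopAlg Om T img_op img_op_cont.

Definition img_map (a : A) : imgAlg :=
  exist _ (f a) (mem_set (ex_intro2 _ _ a I erefl)).

Lemma img_map_ch : cont_hom img_map.
Proof.
case: fch => fc fh; split.
  by apply: continuous_comp_initial.
move=> n o x; apply: val_inj => /=; rewrite fh; by [].
Qed.
Lemma img_map_surj (a : imgAlg) : exists x, img_map x = a.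
Proof.
case: a => b bP; have := set_mem bP; case=> x _ fxb.
by exists x; apply: val_inj.
Qed.

Lemma img_findisc : FinDisc B -> FinDisc imgAlg.
Proof.
case=> fB dB; split.
  have -> : [set: imgAlg] = (@set_val _ (range f)) @^-1` [set: B] by [].
  by apply: finite_preimage => // x y _ _; apply: val_inj.
move=> U.
have -> : U = (@set_val _ (range f)) @^-1` ((@set_val _ (range f)) @` U).
  apply/seteqP; split=> x /=; first by exists x.
  by case=> y Uy /val_inj <-.
apply: open_comp => //; move=> x _; exact: initial_continuous.
Qed.
End Img.

Lemma to_P0 (Om : nat -> topologicalType) (A : topAlg Om) (B : 'I_0 -> topAlg Om) :
  exists g : A -> prodAlg B, cont_hom g.
Proof.
have z : forall i : 'I_0, B i by case=> m hm; exfalso; move: hm; rewrite ltn0.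
exists (fun _ => (z : prodAlg B)); split; first exact: cst_continuous.
move=> n o x; apply: functional_extensionality_dep; case=> m hm.
by exfalso; move: hm; rewrite ltn0.
Qed.

Theorem theorem5p17 (Om : nat -> topologicalType) (V : topAlg Om -> Prop) :
  Stone_variety V -> (forall A, V A -> profinite A) ->
  [/\ Stone_pseudovariety (finite_part V),
      (forall A, hat (finite_part V) A <-> V A)
    & forall S : topAlg Om -> Prop,
        Stone_pseudovariety S -> (forall A, hat S A <-> V A) ->
        forall A, finite_part V A -> S A].
Proof.
move=> [[A0 VA0] VS Vim Vsub Vprod] Vprof.
have VFin A : V A -> finite_set [set: A] -> finite_part V A.
  move=> VA fA; split => //; split => //; apply: fin_haus_open => //.
  by case: (VS A VA).
have fin0 (C : 'I_0 -> topAlg Om) : finite_set [set: prodAlg C].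
  by apply: finite_prod; case=> m hm; exfalso; move: hm; rewrite ltn0.
split.
- split.
  + exists (prodAlg (fun _ : 'I_0 => A0)); apply: VFin => //.
    exact: (Vprod _ (fun _ : 'I_0 => A0)).
  + by move=> A [VA _]; exact: VS.
  + move=> A B f [VA [fA _]] sB fch fs; apply: VFin; first exact: (Vim A B f).
    have -> : [set: B] = f @` [set: A].
      by apply/seteqP; split=> y //= _; have [x fx] := fs y; exists x.
    exact: finite_image.
  + move=> A B f [VA [fA _]] fsub; apply: VFin; first exact: (Vsub A B f).
    case: fsub => _ fi _ _.
    have -> : [set: B] = f @^-1` [set: A] by [].
    by apply: finite_preimage => // x y _ _; apply: fi.
  + move=> n A HA; apply: VFin.
      by apply: Vprod => i; case: (HA i).
    by apply: finite_prod => i; case: (HA i) => _ [].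
- move=> A; split.
  + move=> [sA res].
    pose I := {p : A * A | p.1 != p.2}.
    have H (p : I) : exists B, finite_part V B /\
        exists f : A -> B, cont_hom f /\ f (val p).1 <> f (val p).2.
      by apply: res; apply/eqP; exact: (valP p).
    pose Bs p := projT1 (cid (H p)).
    have BsP p : finite_part V (Bs p) /\ exists f : A -> Bs p,
        cont_hom f /\ f (val p).1 <> f (val p).2 := projT2 (cid (H p)).
    pose fs p := projT1 (cid (BsP p).2).
    have fsP p : cont_hom (fs p) /\ fs p (val p).1 <> fs p (val p).2
      := projT2 (cid (BsP p).2).
    pose g (x : A) : prodAlg Bs := fun p => fs p x.
    have gch : cont_hom g.
      split; first by apply: prod_continuous_into => p; case: (fsP p) => [[]].
      move=> n o x; apply: functional_extensionality_dep => p.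
      by case: (fsP p) => [[_ h] _]; exact: h.
    have gi : injective g.
      move=> x y gxy; apply: contrapT => nxy.
      have pxy : (x, y).1 != (x, y).2 by apply/eqP.
      case: (fsP (exist _ (x, y) pxy)) => _; apply.
      exact: (congr1 (fun h => h (exist _ (x, y) pxy)) gxy).
    apply: (Vsub _ _ g (Vprod _ _ (fun p => (BsP p).1.1))).
    apply: embed => //; first by case: sA.
    apply: prod_hausdorff => p.
    by have [_ h _] := VS _ (BsP p).1.1.
  + move=> VA; split; first exact: VS.
    move=> x y nxy; have [_ pr] := Vprof A VA.
    have [B [fdB [f [fch fxy]]]] := pr x y nxy.
    exists (imgAlg fch); split.
      apply: VFin; last by case: (img_findisc fch fdB).
      apply: (Vim _ _ (img_map fch)) => //.
        apply: findisc_stone; exact: img_findisc.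
        exact: img_map_ch.
      exact: img_map_surj.
    exists (img_map fch); split; first exact: img_map_ch.
    by move=> e; apply: fxy; exact: (congr1 val e).
- move=> S [[C0 SC0] SS Sim Ssub Sprod] hatS A [VA fdA].
  have [sA res] := (hatS A).2 VA.
  have [X XP] : exists X : {fset A}, [set: A] = [set` X]
    := proj1 finite_fsetP fdA.1.
  pose m := size (X : seq _).
  pose e (i : 'I_m) : A := tnth (in_tuple (X : seq _)) i.
  have eS a : exists i, e i = a.
    have aX : a \in (X : seq _) by have : [set` X] a by rewrite -XP.
    have im : (index a (X : seq _) < m)%N by rewrite index_mem.
    exists (Ordinal im); by rewrite /e (tnth_nth a) /= nth_index.
  have P0S : S (prodAlg (fun _ : 'I_0 => C0)) := Sprod 0 _ (fun _ => SC0).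
  have H (i j : 'I_m) : exists B, S B /\ exists g : A -> B,
      cont_hom g /\ (e i <> e j -> g (e i) <> g (e j)).
    case: (pselect (e i = e j)) => eij.
      exists (prodAlg (fun _ : 'I_0 => C0)); split => //.
      have [g gch] := to_P0 A (fun _ : 'I_0 => C0).
      by exists g; split.
    have [B [SB [g [gch gne]]]] := res _ _ eij.
    by exists B; split => //; exists g; split.
  pose Bs i j := projT1 (cid (H i j)).
  have BsP i j : S (Bs i j) /\ exists g : A -> Bs i j,
      cont_hom g /\ (e i <> e j -> g (e i) <> g (e j)) := projT2 (cid (H i j)).
  pose fs i j := projT1 (cid (BsP i j).2).
  have fsP i j : cont_hom (fs i j) /\ (e i <> e j -> fs i j (e i) <> fs i j (e j))
    := projT2 (cid (BsP i j).2).
  pose P := prodAlg (fun i => prodAlg (fun j => Bs i j)).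
  pose G (x : A) : P := fun i => ((fun j => fs i j x) : prodAlg (fun j => Bs i j)).
  have Gch : cont_hom G.
    split.
      apply: prod_continuous_into => i; apply: prod_continuous_into => j.
      by case: (fsP i j) => [[]].
    move=> n o x; apply: functional_extensionality_dep => i.
    apply: functional_extensionality_dep => j.
    by case: (fsP i j) => [[_ h] _]; exact: h.
  have Gi : injective G.
    move=> x y Gxy; apply: contrapT => nxy.
    have [i ei] := eS x; have [j ej] := eS y.
    have ne : e i <> e j by rewrite ei ej.
    case: (fsP i j) => _ /(_ ne); rewrite ei ej; apply.
    exact: (congr1 (fun h => h i j) Gxy).
  apply: (Ssub P A G (Sprod _ _ (fun i => Sprod _ _ (fun j => (BsP i j).1)))).
  apply: embed => //; first by case: sA.
  apply: prod_hausdorff => i; apply: prod_hausdorff => j.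
  by have [_ h _] := SS _ (BsP i j).1.
Qed.
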